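(* Let $q,m,k,s_1,\ldots,s_u$ be positive integers such that $q$ is a prime power and $m\leq q$. Assume that there exist a weighing matrix of order $m$ and weight $k$ and an orthogonal design of order $m$ and type $(s_1,\ldots,s_u)$. Then: (1) there exist $m$ mutually unbiased orthogonal designs of order $mq$ and type $(ks_1,\ldots,ks_u)$ with parameter $\alpha=k^2$; (2) for every nonempty subset $S\subseteq\{1,\ldots,u\}$ there exist $m$ mutually quasi-unbiased weighing matrices for the parameters $\left(mq,\;k\sum_{i\in S}s_i,\;k^2,\;(\sum_{i\in S}s_i)^2\right)$.
   Context: A weighing matrix of order $n$ and weight $k$ is an $n\times n$ matrix $W$ with entries in $\{0,1,-1\}$ such that $WW^\top=kI_n$. Let $x_1,\ldots,x_u$ be distinct commuting real indeterminates. An orthogonal design of order $n$ and type $(s_1,\ldots,s_u)$ in the variables $x_1,\ldots,x_u$ is an $n\times n$ matrix $D$ with entries in $\{0,\pm x_1,\ldots,\pm x_u\}$ such that $DD^\top=(s_1x_1^2+\cdots+s_ux_u^2)I_n$. Two orthogonal designs $D_1,D_2$ of order $n$ and type $(s_1,\ldots,s_u)$ in the same variables are unbiased with parameter $\alpha$ if $\alpha$ is a positive real number and there is a $(0,1,-1)$-matrix $W$ with $D_1D_2^\top=\frac{s_1x_1^2+\cdots+s_ux_u^2}{\sqrt{\alpha}}W$; a family is mutually unbiased with parameter $\alpha$ if any two distinct members are. Two weighing matrices $W_1,W_2$ of order $n$ and weight $k$ are quasi-unbiased for parameters $(n,k,l,a)$ if $\frac{1}{\sqrt a}W_1W_2^\top$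 is a weighing matrix of order $n$ and weight $l$; a family is mutually quasi-unbiased for these parameters if any two distinct members are. *)

(* Defs.v *)
From HB Require Import structures.
From mathcomp Require Import all_boot all_order all_algebra.
From mathcomp Require Import mpoly.
Set Implicit Arguments. Unset Strict Implicit. Unset Printing Implicit Defensive.
Import Order.TTheory GRing.Theory Num.Theory.
Local Open Scope ring_scope.

Definition prime_power (q : nat) : Prop :=
  exists p e : nat, prime p /\ (0 < e)%N /\ q = (p ^ e)%N.

Definition zpm_mx (n : nat) (W : 'M[int]_n) : Prop :=
  forall i j, W i j = 0 \/ W i j = 1 \/ W i j = -1.

Definition weighing_matrix (n k : nat) (W : 'M[int]_n) : Prop :=
  zpm_mx W /\ W *m W^T = (k%:Z)%:M.

Definition od_form (R : rcfType) (u : nat) (s : 'I_u -> nat) : {mpoly R[u]} :=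
  \sum_(l < u) (s l)%:R * 'X_l ^+ 2.

Definition orthogonal_design (R : rcfType) (n u : nat) (s : 'I_u -> nat)
    (D : 'M[{mpoly R[u]}]_n) : Prop :=
  (forall i j, D i j = 0 \/ exists l : 'I_u, D i j = 'X_l \/ D i j = - 'X_l)
  /\ D *m D^T = (od_form R s)%:M.

Definition unbiased_od (R : rcfType) (n u : nat) (s : 'I_u -> nat) (alpha : R)
    (D1 D2 : 'M[{mpoly R[u]}]_n) : Prop :=
  0 < alpha /\
  exists W : 'M[int]_n, zpm_mx W /\
    D1 *m D2^T = ((Num.sqrt alpha)^-1 *: od_form R s) *: map_mx (fun z : int => z%:~R) W.

Definition mutually_unbiased_ods (R : rcfType) (m n u : nat) (s : 'I_u -> nat)
    (alpha : R) (F : 'I_m -> 'M[{mpoly R[u]}]_n) : Prop :=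
  injective F /\
  (forall i, orthogonal_design s (F i)) /\
  (forall i j, i != j -> unbiased_od s alpha (F i) (F j)).

Definition quasi_unbiased (R : rcfType) (n k l : nat) (a : R) (W1 W2 : 'M[int]_n) : Prop :=
  weighing_matrix k W1 /\ weighing_matrix k W2 /\
  exists W : 'M[int]_n, weighing_matrix l W /\
    (Num.sqrt a)^-1 *: map_mx (fun z : int => z%:~R : R) (W1 *m W2^T)
      = map_mx (fun z : int => z%:~R) W.

Definition mutually_quasi_unbiased (R : rcfType) (m n k l : nat) (a : R)
    (F : 'I_m -> 'M[int]_n) : Prop :=
  injective F /\
  (forall i, weighing_matrix k (F i)) /\
  (forall i j, i != j -> quasi_unbiased k l a (F i) (F j)).

(* Main.v *)
Require Import Defs.
From HB Require Import structures.
From mathcomp Require Import all_boot all_order all_algebra.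
From mathcomp Require Import mpoly.
From mathcomp Require Import fingroup perm finfield.
Import Order.TTheory GRing.Theory Num.Theory.
Local Open Scope ring_scope.

Set Implicit Arguments. Unset Strict Implicit. Unset Printing Implicit Defensive.

Section Idx.
Variables (m q : nat) (F : finType) (cF : #|F| = q).
Local Notation T := ('I_m * F)%type.

Lemma cardT : #|{: T}| = (m * q)%N.
Proof. by rewrite card_prod card_ord cF. Qed.

Definition psi (t : T) : 'I_(m * q) := cast_ord cardT (enum_rank t).
Definition phi (r : 'I_(m * q)) : T := enum_val (cast_ord (esym cardT) r).

Lemma psiK : cancel psi phi.
Proof. by move=> t; rewrite /phi /psi cast_ordK enum_rankK. Qed.
Lemma phiK : cancel phi psi.
Proof. by move=> r; rewrite /phi /psi enum_valK cast_ordKV. Qed.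

Lemma sum_psi (R : nmodType) (G : 'I_(m * q) -> R) :
  \sum_r G r = \sum_(t : T) G (psi t).
Proof. by rewrite (reindex psi) //; exists phi => x _; [rewrite psiK | rewrite phiK]. Qed.

Lemma sum_delta (R : pzSemiRingType) (x0 : F) (G : F -> R) :
  \sum_x ((x0 == x)%:R * G x) = G x0.
Proof.
rewrite (bigD1 x0) //= eqxx mul1r big1 ?addr0 // => x /negPf.
by rewrite eq_sym => ->; rewrite mul0r.
Qed.

Lemma sum_pair (R : nmodType) (G : T -> R) :
  \sum_(t : T) G t = \sum_c \sum_x G (c, x).
Proof. by rewrite pair_bigA; apply: eq_bigr => -[]. Qed.

Lemma sum_delta' (R : pzSemiRingType) (x0 : F) (G : F -> R) :
  \sum_x (G x * (x0 == x)%:R) = G x0.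
Proof.
rewrite (bigD1 x0) //= eqxx mulr1 big1 ?addr0 // => x /negPf.
by rewrite eq_sym => ->; rewrite mulr0.
Qed.

Section Ring.
Variable R : comNzRingType.

Definition Lb (A : 'M[R]_m) : 'M[R]_(m * q) :=
  \matrix_(r, r') (A (phi r).1 (phi r').1 * ((phi r).2 == (phi r').2)%:R).

Lemma LbE A a x b y : Lb A (psi (a, x)) (psi (b, y)) = A a b * (x == y)%:R.
Proof. by rewrite mxE !psiK. Qed.

Lemma Lb_mul A B : Lb A *m Lb B = Lb (A *m B).
Proof.
apply/matrixP => r r'; rewrite -(phiK r) -(phiK r').
case: (phi r) => a x; case: (phi r') => b y.
rewrite LbE !mxE sum_psi sum_pair big_distrl /=; apply: eq_bigr => c _.
under eq_bigr do rewrite !LbE mulrACA.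
by rewrite -big_distrr /= sum_delta.
Qed.

Lemma Lb_tr A : (Lb A)^T = Lb A^T.
Proof. by apply/matrixP => r r'; rewrite !mxE eq_sym. Qed.

Lemma Lb_scalar z : Lb z%:M = z%:M.
Proof.
apply/matrixP => r r'; rewrite -(phiK r) -(phiK r').
case: (phi r) => a x; case: (phi r') => b y.
rewrite LbE !mxE (inj_eq (can_inj psiK)) xpair_eqE.
by case: (a == b); case: (x == y); rewrite /= ?mulr1 ?mulr0.
Qed.

End Ring.

Lemma Lb_map (R1 R2 : comNzRingType) (f : GRing.RMorphism.type R1 R2) A :
  map_mx f (Lb A) = Lb (map_mx f A).
Proof. by apply/matrixP => r r'; rewrite !mxE rmorphM rmorph_nat. Qed.

Definition tau_fun (rho : {perm T}) (r : 'I_(m * q)) := psi (rho (phi r)).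
Lemma tau_inj rho : injective (tau_fun rho).
Proof. by move=> r r' /(can_inj psiK)/perm_inj/(can_inj phiK). Qed.
Definition tau rho : 'S_(m * q) := perm (@tau_inj rho).

Lemma tauE rho t : tau rho (psi t) = psi (rho t).
Proof. by rewrite permE /tau_fun psiK. Qed.

Lemma tauM r1 r2 : tau (r1 * r2)%g = (tau r1 * tau r2)%g.
Proof. by apply/permP => r; rewrite -(phiK r) permM !tauE permM. Qed.

Lemma tau1 : tau 1%g = 1%g.
Proof. by apply/permP => r; rewrite -(phiK r) tauE !perm1. Qed.

Lemma tauV rho : tau rho^-1%g = (tau rho)^-1%g.
Proof.
apply/permP => r; apply: (@perm_inj _ (tau rho)); rewrite permKV.
by rewrite -(phiK r) !tauE permKV.
Qed.

Lemma tau_injective : injective tau.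
Proof.
move=> r1 r2 E; apply/permP => t.
by apply: (can_inj psiK); rewrite -!tauE E.
Qed.

End Idx.


Section Dm.
Variables (m q : nat) (F : finType) (cF : #|F| = q).
Local Notation T := ('I_m * F)%type.
Local Notation psi := (psi cF).
Local Notation phi := (phi cF).
Local Notation Lb := (Lb cF).
Local Notation tau := (tau cF).
Variables (R : comNzRingType) (W : 'M[R]_m).

Definition Dm (rho : {perm T}) (A : 'M[R]_m) : 'M[R]_(m * q) :=
  Lb W *m perm_mx (tau rho) *m Lb A.

Lemma LbE' (A : 'M[R]_m) t t' : Lb A (psi t) (psi t') = A t.1 t'.1 * (t.2 == t'.2)%:R.
Proof. by rewrite mxE !psiK. Qed.

Lemma DmE rho A a x b y : Dm rho A (psi (a, x)) (psi (b, y)) =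
  \sum_c W a c * A (rho (c, x)).1 b * ((rho (c, x)).2 == y)%:R.
Proof.
rewrite /Dm -mulmxA -row_permE !mxE (sum_psi cF) sum_pair; apply: eq_bigr => c _.
under eq_bigr do rewrite [row_perm _ _ _ _]mxE (tauE cF) !LbE' /= mulrAC.
by rewrite sum_delta' mulrA.
Qed.

Lemma Dm_single (rho : {perm T}) (A : 'M[R]_m) a (x : F) b y : injective (fun c => (rho (c, x)).2) ->
  Dm rho A (psi (a, x)) (psi (b, y)) = 0 \/
  exists c, Dm rho A (psi (a, x)) (psi (b, y)) = W a c * A (rho (c, x)).1 b.
Proof.
move=> inj; rewrite DmE.
case: (pickP (fun c => (rho (c, x)).2 == y)) => [c0 Hc0 | none]; last first.
  by left; apply: big1 => c _; rewrite none mulr0.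
right; exists c0; rewrite (bigD1 c0) //= Hc0 mulr1 big1 ?addr0 // => c nc.
case E: ((rho (c, x)).2 == y); last by rewrite mulr0.
by move: nc; rewrite (inj c c0) ?eqxx //; rewrite (eqP E) (eqP Hc0).
Qed.

Lemma Dm_mul r1 r2 A B z : A *m B^T = z%:M ->
  Dm r1 A *m (Dm r2 B)^T = z *: Dm (r1 * r2^-1)%g W^T.
Proof.
move=> AB; rewrite /Dm !trmx_mul !Lb_tr tr_perm_mx !mulmxA.
rewrite -(mulmxA _ (Lb A)) Lb_mul AB Lb_scalar mul_mx_scalar.
rewrite -!scalemxAl -(mulmxA _ (perm_mx _)) -perm_mxM -tauV -tauM.
by [].
Qed.

Lemma Dm1 A : Dm 1%g A = Lb (W *m A).
Proof. by rewrite /Dm tau1 perm_mx1 mulmx1 Lb_mul. Qed.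

End Dm.

Lemma Dm_map (m q : nat) (F : finType) (cF : #|F| = q) (R1 R2 : comNzRingType)
  (f : GRing.RMorphism.type R1 R2) (W : 'M[R1]_m) (rho : {perm 'I_m * F}) (A : 'M[R1]_m) :
  map_mx f (Dm cF W rho A) = Dm cF (map_mx f W) rho (map_mx f A).
Proof. by rewrite /Dm !map_mxM !Lb_map map_perm_mx. Qed.

Lemma perm_mx_inj (R : nzRingType) n (s1 s2 : 'S_n) :
  perm_mx s1 = perm_mx s2 :> 'M[R]_n -> s1 = s2.
Proof.
move/matrixP=> E; apply/permP => i; have := E i (s1 i).
rewrite /perm_mx !mxE eqxx; case: eqP => // _ /eqP; by rewrite oner_eq0.
Qed.

Lemma Dm_inj (m q : nat) (F : finType) (cF : #|F| = q) (R : idomainType)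
  (W A : 'M[R]_m) (r1 r2 : {perm 'I_m * F}) z k :
  A *m A^T = z%:M -> W^T *m W = k%:M -> k * z != 0 ->
  Dm cF W r1 A = Dm cF W r2 A -> r1 = r2.
Proof.
move=> AA WW kz E.
have key r : Lb cF W^T *m Dm cF W r A *m Lb cF A^T = (k * z) *: perm_mx (tau cF r).
  rewrite /Dm !mulmxA Lb_mul WW Lb_scalar mul_scalar_mx -!scalemxAl.
  by rewrite -mulmxA Lb_mul AA Lb_scalar mul_mx_scalar scalerA mulrC.
have := key r1; rewrite E key => /matrixP E2.
suff: tau cF r1 = tau cF r2 by apply: tau_injective.
apply: (@perm_mx_inj R).
by apply/matrixP => i j; have := E2 i j; rewrite !mxE => /mulfI ->.
Qed.

Lemma WtW (m k : nat) (W : 'M[int]_m) : (0 < k)%N ->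
  W *m W^T = (k%:Z)%:M -> W^T *m W = (k%:Z)%:M.
Proof.
move=> k0 E.
have Er : map_mx (intmul (1 : rat)) W *m (map_mx (intmul (1 : rat)) W)^T = (k%:R)%:M.
  by rewrite map_trmx -map_mxM E map_scalar_mx /= pmulrn.
have kn : (k%:R : rat) != 0 by rewrite pnatr_eq0 -lt0n.
have : map_mx (intmul (1 : rat)) W *m ((k%:R)^-1 *: (map_mx (intmul (1 : rat)) W)^T) = 1%:M.
  by rewrite -scalemxAr Er scale_scalar_mx mulVf.
move/mulmx1C; rewrite -scalemxAl => H.
have Hm : map_mx (intmul (1 : rat)) (W^T *m W) = (k%:R : rat)%:M.
  rewrite map_mxM -map_trmx /=.
  apply: (scalerI (invr_neq0 kn)); rewrite scale_scalar_mx mulVf //; exact: H.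
apply/matrixP => i j; apply: (@intr_inj rat); move/matrixP: Hm => /(_ i j).
rewrite !mxE => ->.
by case: (i == j); rewrite ?mulr0n ?mulr1n // -pmulrn.
Qed.


Section Sig.
Variables (F : fieldType) (m : nat) (g : 'I_m -> F) (g_inj : injective g).

Lemma inj_lin (x a b : F) : a != b -> injective (fun c => x + a * g c - b * g c).
Proof.
move=> ab c c' /= /eqP; rewrite -!addrA -!mulrBl (inj_eq (addrI _)) => /eqP.
by move/(mulfI _)=> H; apply: g_inj; apply: H; rewrite subr_eq0.
Qed.
End Sig.

Definition sig_prop (F : finType) m (sg : 'I_m -> {perm 'I_m * F}) :=
  injective sg /\ (forall i x, injective (fun c => (sg i (c, x)).2)) /\
  (forall i j x, i != j -> injective (fun c => ((sg i * (sg j)^-1)%g (c, x)).2)).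

Lemma exists_sigA (F : finFieldType) (m : nat) : (m < #|F|)%N ->
  exists sg : 'I_m -> {perm 'I_m * F}, sig_prop sg.
Proof.
move=> lt.
have le : (m <= #|[set~ (0%R : F)]|)%N by rewrite cardsC1 -ltnS (ltn_predK lt).
pose e (c : 'I_m) : F := enum_val (widen_ord le c).
have e_inj : injective e.
  by move=> c c' /enum_val_inj /(congr1 val) /= /val_inj.
have e0 c : e c != 0.
  by have := enum_valP (widen_ord le c); rewrite !inE.
have inj i : injective (fun t : 'I_m * F => (t.1, t.2 + e i * e t.1)).
  move=> [c x] [c' x'] /= [<-] /(addIr _) ->; by [].
pose sg i := perm (inj i).
have sgE i t : sg i t = (t.1, t.2 + e i * e t.1) by rewrite permE.
have sgV j c y : (sg j)^-1%g (c, y) = (c, y - e j * e c).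
  by apply: (@perm_inj _ (sg j)); rewrite permKV sgE /= subrK.
exists sg; split; last split.
- move=> i j E; have := sgE i (i, 0); rewrite E sgE /= => -[].
  by rewrite !add0r => /(mulIf (e0 i)) /e_inj.
- move=> i x c c' /=; rewrite !sgE /= => /(addrI _) /(mulfI (e0 i)); exact: e_inj.
- move=> i j x ij c c' /=; rewrite !permM !sgE !sgV /=.
  apply: (inj_lin e_inj (x := x)); by rewrite (inj_eq e_inj).
Qed.

Lemma exists_sigB (F : finFieldType) (m : nat) : m = #|F| ->
  exists sg : 'I_m -> {perm 'I_m * F}, sig_prop sg.
Proof.
move=> eqm.
pose h (c : 'I_m) : F := enum_val (cast_ord eqm c).
pose h' (x : F) : 'I_m := cast_ord (esym eqm) (enum_rank x).
have hK : cancel h h' by move=> c; rewrite /h /h' enum_valK cast_ordK.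
have h'K : cancel h' h by move=> x; rewrite /h /h' cast_ordKV enum_rankK.
have h_inj := can_inj hK.
have h'_inj : injective h' := can_inj h'K.
have inj i : injective (fun t : 'I_m * F => (h' (t.2 + h i * h t.1), h t.1)).
  move=> [c x] [c' x'] E.
  have /= /h_inj Ec := congr1 snd E; subst c'.
  have E2 := h'_inj _ _ (congr1 fst E); simpl in E2.
  by rewrite (addIr _ E2).
pose sg i := perm (inj i).
have sgE i t : sg i t = (h' (t.2 + h i * h t.1), h t.1) by rewrite permE.
have sgV j c y : (sg j)^-1%g (c, y) = (h' y, h c - h j * y).
  by apply: (@perm_inj _ (sg j)); rewrite permKV sgE /= h'K subrK hK.
exists sg; split; last split.
- move=> i j E; have := sgE i (h' 1, 0); rewrite E sgE /= => -[].
  by rewrite h'K !mulr1 !add0r => /val_inj /enum_rank_inj /h_inj ->.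
- by move=> i x c c' /=; rewrite !sgE /= => /h_inj.
- move=> i j x ij c c' /=; rewrite !permM !sgE !sgV /= !h'K.
  apply: (inj_lin h_inj (x := x)); by rewrite (inj_eq h_inj).
Qed.

Lemma exists_sig (F : finFieldType) (m : nat) : (m <= #|F|)%N ->
  exists sg : 'I_m -> {perm 'I_m * F}, sig_prop sg.
Proof.
rewrite leq_eqVlt => /orP [/eqP|]; [exact: exists_sigB | exact: exists_sigA].
Qed.


Lemma zpm_prod (w d : int) : (w = 0 \/ w = 1 \/ w = -1) ->
  (d = 0 \/ d = 1 \/ d = -1) -> (w * d = 0 \/ w * d = 1 \/ w * d = -1).
Proof.
by case=> [->|[->|->]] [->|[->|->]]; rewrite ?mul0r ?mulr0 ?mul1r ?mulr1 ?mulrNN ?mulr1;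
  auto.
Qed.

Lemma od_prod (R : rcfType) (u : nat) (w : int) (d : {mpoly R[u]}) :
  (w = 0 \/ w = 1 \/ w = -1) ->
  (d = 0 \/ exists l : 'I_u, d = 'X_l \/ d = - 'X_l) ->
  (w%:~R * d = 0 \/ exists l : 'I_u, w%:~R * d = 'X_l \/ w%:~R * d = - 'X_l).
Proof.
case=> [->|[->|->]]; first by left; rewrite mul0r.
  by rewrite mul1r.
case=> [->|[l [->|->]]]; first by left; rewrite mulr0.
  by right; exists l; right; rewrite mulN1r.
by right; exists l; left; rewrite mulN1r opprK.
Qed.

Lemma zpm_tr m (W : 'M[int]_m) : zpm_mx W -> zpm_mx W^T.
Proof. by move=> zW i j; rewrite mxE. Qed.

Lemma Dm_zpm (m q : nat) (F : finType) (cF : #|F| = q) (W A : 'M[int]_m)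
  (rho : {perm 'I_m * F}) :
  zpm_mx W -> zpm_mx A -> (forall x, injective (fun c => (rho (c, x)).2)) ->
  zpm_mx (Dm cF W rho A).
Proof.
move=> zW zA inj r r'; rewrite -(phiK cF r) -(phiK cF r').
case: (phi cF r) => a x; case: (phi cF r') => b y.
case: (Dm_single cF W A a b y (inj x)) => [->|[c ->]]; first by left.
exact: zpm_prod.
Qed.

Lemma Dm_odent (R : rcfType) (u m q : nat) (F : finType) (cF : #|F| = q)
  (W : 'M[int]_m) (A : 'M[{mpoly R[u]}]_m) (rho : {perm 'I_m * F}) r r' :
  zpm_mx W ->
  (forall i j, A i j = 0 \/ exists l : 'I_u, A i j = 'X_l \/ A i j = - 'X_l) ->
  (forall x, injective (fun c => (rho (c, x)).2)) ->
  let M := Dm cF (map_mx (intmul 1) W) rho A in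
  M r r' = 0 \/ exists l : 'I_u, M r r' = 'X_l \/ M r r' = - 'X_l.
Proof.
move=> zW zA inj /=; rewrite -(phiK cF r) -(phiK cF r').
case: (phi cF r) => a x; case: (phi cF r') => b y.
case: (Dm_single cF (map_mx (intmul 1) W) A a b y (inj x)) => [->|[c ->]];
  first by left.
rewrite mxE; exact: od_prod.
Qed.

Lemma od_eval (R : rcfType) (u : nat) (s : 'I_u -> nat) (v : 'I_u -> R) :
  meval v (od_form R s) = \sum_l (s l)%:R * v l ^+ 2.
Proof.
rewrite /od_form rmorph_sum; apply: eq_bigr => l _.
by rewrite rmorphM rmorph_nat rmorphXn /= mevalXU.
Qed.

Lemma od_k (R : rcfType) (u : nat) (s : 'I_u -> nat) (k : nat) :
  od_form R (fun i => (k * s i)%N) = (k%:R : {mpoly R[u]}) * od_form R s.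
Proof.
by rewrite /od_form mulr_sumr; apply: eq_bigr => l _; rewrite natrM mulrA.
Qed.


Unset Implicit Arguments. Set Strict Implicit.

Theorem theorem4p8 (R : rcfType) (q m k u : nat) (s : 'I_u -> nat) :
  (0 < q)%N -> (0 < m)%N -> (0 < k)%N -> (0 < u)%N -> (forall i, 0 < s i)%N ->
  prime_power q -> (m <= q)%N ->
  (exists W : 'M[int]_m, weighing_matrix k W) ->
  (exists D : 'M[{mpoly R[u]}]_m, orthogonal_design s D) ->
  (exists F : 'I_m -> 'M[{mpoly R[u]}]_(m * q),
     mutually_unbiased_ods (fun i => (k * s i)%N) ((k ^ 2)%:R : R) F)
  /\
  (forall S : {set 'I_u}, S != set0 ->
     exists F : 'I_m -> 'M[int]_(m * q),
       mutually_quasi_unbiased (k * \sum_(i in S) s i)%N (k ^ 2)%N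
         (((\sum_(i in S) s i) ^ 2)%N%:R : R) F).
Proof.
move=> q0 m0 k0 u0 s0 [p [e [pr [e0 qpe]]]] mq [W0 [zW WW]] [D0 [zD DD]].
have [Fq _ cardF] := pPrimePowerField pr e0.
have cF : #|Fq| = q by rewrite cardF qpe.
have [sg [sg_inj [sgA sgB]]] : exists sg : 'I_m -> {perm 'I_m * Fq}, sig_prop sg.
  by apply: exists_sig; rewrite cF.
have WtW0 := WtW k0 WW.
have kn0 : (k%:Z != 0) by rewrite eqz_nat -lt0n.
split.
  pose P := {mpoly R[u]}.
  pose f := od_form R s.
  pose Wp := map_mx (intmul (1 : P)) W0.
  have WpWp : Wp *m Wp^T = (k%:R : P)%:M.
    by rewrite /Wp map_trmx -map_mxM WW map_scalar_mx /= pmulrn.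
  have WptWp : Wp^T *m Wp = (k%:R : P)%:M.
    by rewrite /Wp map_trmx -map_mxM WtW0 map_scalar_mx /= pmulrn.
  have fne : (k%:R : P) * f != 0.
    have H1 : meval (fun _ => 1 : R) ((k%:R : P) * f) != 0.
      rewrite rmorphM rmorph_nat /= /f od_eval mulf_neq0 // ?pnatr_eq0 -?lt0n //.
      under eq_bigr do rewrite expr1n mulr1.
      by rewrite -natr_sum pnatr_eq0 -lt0n (bigD1 (Ordinal u0)) //= addn_gt0 s0.
    by apply: contraNneq H1 => ->; rewrite rmorph0.
  exists (fun i => Dm cF Wp (sg i) D0); split; last split.
  - by move=> i j /(Dm_inj DD WptWp fne) /sg_inj.
  - move=> i; split.
      by move=> r r'; exact: (Dm_odent cF r r' zW zD (sgA i)).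
    rewrite (Dm_mul cF Wp (sg i) (sg i) DD) mulgV Dm1 WpWp Lb_scalar.
    by rewrite scale_scalar_mx od_k mulrC.
  - move=> i j ij; split; first by rewrite ltr0n expn_gt0 k0.
    exists (Dm cF W0 ((sg i) * (sg j)^-1)%g W0^T); split.
      by apply: Dm_zpm => //; [exact: zpm_tr | exact: (fun x => sgB i j x ij)].
    rewrite (Dm_mul cF Wp (sg i) (sg j) DD) Dm_map -map_trmx.
    have -> : (Num.sqrt ((k ^ 2)%:R : R))^-1 *: od_form R (fun i => (k * s i)%N) = f.
      rewrite od_k natrX sqrtr_sqr ger0_norm ?ler0n // scalerAl.
      rewrite -[(k%:R : P)]scale1r -scaler_nat scalerA mul1r scalerA mulVf ?scale1r ?mul1r //.
      by rewrite pnatr_eq0 -lt0n.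
    by [].
move=> S Sn.
pose sS := (\sum_(i in S) s i)%N.
have sS0 : (0 < sS)%N.
  by case/set0Pn: Sn => l lS; rewrite /sS (bigD1 l) //= addn_gt0 s0.
pose v : 'I_u -> R := fun l => (l \in S)%:R.
have Ev a b : exists z : int, (z = 0 \/ z = 1 \/ z = -1) /\ meval v (D0 a b) = z%:~R.
  case: (zD a b) => [->|[l [->|->]]].
  - by exists 0; split; [left | rewrite rmorph0].
  - exists (l \in S)%:R; rewrite (mevalXU v l) /v.
    by case: (l \in S); split; [right; left | | left | ].
  - exists (- (l \in S)%:R); rewrite mevalN (mevalXU v l) /v.
    by case: (l \in S); split; [right; right | rewrite mulrNz | left; rewrite oppr0 | rewrite oppr0].
have Evb a b : exists z : int,
    ((z == 0) || (z == 1) || (z == -1)) && (meval v (D0 a b) == z%:~R).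
  case: (Ev a b) => z [H1 H2]; exists z; rewrite H2 eqxx andbT.
  by case: H1 => [->|[->|->]]; rewrite eqxx ?orbT.
pose E := \matrix_(a, b) xchoose (Evb a b).
have EP a b := xchooseP (Evb a b).
have zE : zpm_mx E.
  by move=> a b; rewrite mxE; case/andP: (EP a b) => /orP [/orP [|]|] /eqP; auto.
have Emap : map_mx (intmul (1 : R)) E = map_mx (meval v) D0.
  by apply/matrixP => a b; rewrite !mxE; case/andP: (EP a b) => _ /eqP E1; exact: esym E1.
have EE : E *m E^T = (sS%:Z)%:M.
  have H : map_mx (intmul (1 : R)) (E *m E^T) = (sS%:R : R)%:M.
    rewrite map_mxM -map_trmx Emap map_trmx -map_mxM DD map_scalar_mx /= od_eval.
    congr (_%:M); rewrite /sS natr_sum [RHS]big_mkcond /=; apply: eq_bigr => l _.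
    by rewrite /v; case: (l \in S); rewrite ?expr1n ?mulr1 ?expr0n ?mulr0.
  apply/matrixP => i j; apply: (@intr_inj R); move/matrixP: H => /(_ i j).
  rewrite !mxE => ->.
  by case: (i == j); rewrite ?mulr0n ?mulr1n // -pmulrn.
pose Fam i := Dm cF W0 (sg i) E.
have wf i : weighing_matrix (k * sS) (Fam i).
  split; first by apply: Dm_zpm => //; exact: sgA.
  rewrite (Dm_mul cF W0 (sg i) (sg i) EE) mulgV Dm1 WW Lb_scalar.
  by rewrite scale_scalar_mx; congr (_%:M); rewrite PoszM mulrC.
exists Fam; split; last split.
- move=> i j /(Dm_inj EE WtW0) H; apply: sg_inj; apply: H.
  by rewrite mulf_neq0 // eqz_nat -lt0n.
- exact: wf.
- move=> i j ij; split; first exact: wf.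
  split; first exact: wf.
  exists (Dm cF W0 ((sg i) * (sg j)^-1)%g W0^T); split.
    split; first by apply: Dm_zpm => //; [exact: zpm_tr | exact: (fun x => sgB i j x ij)].
    have WtWt : W0^T *m W0^T^T = (k%:Z)%:M by rewrite trmxK.
    rewrite (Dm_mul cF W0 _ _ WtWt) mulgV Dm1 WW Lb_scalar.
    by rewrite scale_scalar_mx -PoszM mulnn.
  rewrite (Dm_mul cF W0 (sg i) (sg j) EE).
  apply/matrixP => r r'; rewrite !mxE intrM -pmulrn natrX sqrtr_sqr ger0_norm ?ler0n //.
  by rewrite mulrA mulVf ?mul1r // pnatr_eq0 -lt0n.
Qed.
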